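(* Let $M$ be a finite monoid in $\mathbf{DG}$, $X,Y\in\Lambda(M)$ with idempotent generators $e_X,e_Y$. Then $m\in\mathrm{Irr}_{\mathscr K(M)}(e_X,e_Y)$ if and only if: (1) $e_X=e_R(m)$; (2) $e_Y=e_L(m)$; (3) $m\notin\nabla Y\nabla X$; (4) $m$ is a null element.
   Context: $E(M)$ idempotents. $M$ is rectangular if each $\{f\in E(M):MfM=MeM\}$ is closed under multiplication; $M\in\mathbf{DG}$ if it is rectangular and $MeM=MfM$ implies $e=f$ for idempotents. $\Lambda(M)$ is the set of ideals $MeM$, $e\in E(M)$. $\nabla X=\{m: X\not\subseteq MmM\}$, $\nabla Y\nabla X=\{ab: a\in\nabla Y, b\in\nabla X\}$. $\mathrm{St}_L(m)=\{n:nm=m\}$, $\mathrm{St}_R(m)=\{n: mn=m\}$ are submonoids in $\mathbf{DG}$; $e_L(m)$, $e_R(m)$ denote the unique idempotent in the minimal ideal of $\mathrm{St}_L(m)$, $\mathrm{St}_R(m)$ respectively. $m$ is null if $m\notin mMm$. $\mathscr K(M)$: objects $E(M)$, morphisms $e\to f$ elements of $fMe$, composition the product; a morphism is irreducible if it is neither a split mono nor a split epi and whenever it factors as $gh$, $h$ is a split mono or $g$ a split epi; $\mathrm{Irr}_{\mathscr K(M)}(e,f)$ is the set of these. *)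

(* Defs.v *)
From mathcomp Require Import all_boot.
Set Implicit Arguments. Unset Strict Implicit. Unset Printing Implicit Defensive.

Record finMonoid := FinMonoid {
  mcarrier :> finType;
  mmul : mcarrier -> mcarrier -> mcarrier;
  mone : mcarrier;
  mmulA : associative mmul;
  mul1m : left_id mone mmul;
  mulm1 : right_id mone mmul }.

Section Defs.
Variable M : finMonoid.
Local Notation "x * y" := (mmul x y).

Definition idem (e : M) : bool := e * e == e.

Definition J (a : M) : {set M} := [set (x * a) * y | x : M, y : M].

Definition rectangular : Prop :=
  forall e f g : M, idem e -> idem f -> idem g -> J f = J e -> J g = J e ->
    idem (f * g) /\ J (f * g) = J e.

Definition inDG : Prop :=
  rectangular /\ forall e f : M, idem e -> idem f -> J e = J f -> e = f.

Definition Lambda (X : {set M}) : Prop := exists2 e : M, idem e & X = J e.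

Definition nabla (X : {set M}) : {set M} := [set m : M | ~~ (X \subset J m)].

Definition nablaprod (Y X : {set M}) : {set M} :=
  [set a * b | a in nabla Y, b in nabla X].

Definition StL (m : M) : {set M} := [set n : M | n * m == m].
Definition StR (m : M) : {set M} := [set n : M | m * n == m].

Definition is_ideal_of (S I : {set M}) : bool :=
  (I \subset S) &&
  [forall s in S, forall i in I, (s * i \in I) && (i * s \in I)].

Definition minideal (S : {set M}) : {set M} :=
  [set k in S | [forall I : {set M}, (is_ideal_of S I && (I != set0)) ==> (k \in I)]].

(* the unique idempotent of the minimal ideal of St_L(m), St_R(m)
   (unique when M is in DG; default 1 otherwise) *)
Definition eL (m : M) : M := odflt (mone M) [pick e in minideal (StL m) | idem e].
Definition eR (m : M) : M := odflt (mone M) [pick e in minideal (StR m) | idem e].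

Definition null (m : M) : Prop := ~ exists x : M, m = (m * x) * m.

(* the category K(M): objects E(M), morphisms e -> f are elements of fMe *)
Definition hom (e f : M) (m : M) : Prop := exists x : M, m = (f * x) * e.

Definition split_mono (e g h : M) : Prop := exists2 r : M, hom g e r & r * h = e.
Definition split_epi (g f k : M) : Prop := exists2 s : M, hom f g s & k * s = f.

Definition irreducible (e f m : M) : Prop :=
  [/\ hom e f m, ~ split_mono e f m, ~ split_epi e f m &
      forall (g h k : M), idem g -> hom e g h -> hom g f k -> m = k * h ->
        split_mono e g h \/ split_epi g f k].

End Defs.

(* Main.v *)
Require Import Defs.
From mathcomp Require Import all_boot.
Set Implicit Arguments. Unset Strict Implicit. Unset Printing Implicit Defensive.

Local Notation "x ** y" := (mmul x y) (at level 40, left associativity).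

Definition mpow (M : finMonoid) (t : M) (n : nat) : M := iter n (mmul t) (mone M).

Lemma mpowD (M : finMonoid) (t : M) a b : mpow t (a + b) = mpow t a ** mpow t b.
Proof.
elim: a => [|a IH] /=; first by rewrite add0n mul1m.
by rewrite IH mmulA.
Qed.

Lemma idem_pow (M : finMonoid) (t : M) :
  exists2 n, 0 < n & mpow t n ** mpow t n = mpow t n.
Proof.
pose f := fun i : 'I_(#|M|).+1 => mpow t i.
have [/existsP [i /existsP [j /andP [nij /eqP fij]]]|H] :=
  boolP [exists i, [exists j, (i != j) && (f i == f j)]]; last first.
  exfalso.
  have injf : injective f.
    move=> i j fij; apply/eqP; apply: contraNT H => nij.
    by apply/existsP; exists i; apply/existsP; exists j; rewrite nij fij eqxx.
  by have := leq_card f injf; rewrite card_ord ltnn.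
wlog lij : i j nij fij / i < j.
  move=> W; case: (ltngtP i j) => [l|l|e]; first exact: W l.
    by apply: (W j i) => //; rewrite eq_sym.
  by move: nij; rewrite (val_inj e) eqxx.
rewrite /f in fij.
set p := j - i.
have pj : i + p = j by rewrite /p subnKC // ltnW.
have step : forall b, i <= b -> mpow t (b + p) = mpow t b.
  move=> b ib; rewrite -(subnK ib) -addnA pj mpowD -fij -mpowD //.
have stepc : forall c b, i <= b -> mpow t (b + c * p) = mpow t b.
  elim=> [|c IH] b ib; first by rewrite mul0n addn0.
  by rewrite mulSn (addnC p) addnA step ?IH // (leq_trans ib) // leq_addr.
have p0 : 0 < p by rewrite subn_gt0.
exists (p * i.+1); first by rewrite muln_gt0 p0.
rewrite -mpowD mulnC stepc //.

by rewrite mulSn (leq_trans _ (leq_addl _ _)) // leq_pmulr.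
Qed.

Lemma stabL (M : finMonoid) (a b u v x : M) :
  b = u ** a ** v -> a = x ** b -> exists w, b = w ** a.
Proof.
move=> hb ha; set t := u ** x.
have hn : forall n, b = mpow t n ** b ** mpow v n.
  elim=> [|n IH]; first by rewrite /= mul1m mulm1.
  have e1 : mpow t n.+1 = mpow t n ** t by rewrite -addn1 mpowD /= mulm1.
  rewrite e1 {1}IH {1}hb ha /t !mmulA.
  by rewrite -!(mmulA _ b) -!mmulA.
have [n n0 idn] := idem_pow t.
have eb : mpow t n ** b = b.
  by rewrite {2}(hn n) {1}(hn n) !mmulA idn.
case: n n0 idn eb => // n _ _ eb.
exists (mpow t n ** u).
rewrite -{1}eb -addn1 mpowD /= mulm1 /t ha !mmulA.
by rewrite -!mmulA.
Qed.

Definition opM (M : finMonoid) : finMonoid.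
Proof.
refine (@FinMonoid (mcarrier M) (fun x y => mmul y x) (mone M) _ _ _).
- by move=> x y z /=; rewrite mmulA.
- by move=> x; rewrite mulm1.
- by move=> x; rewrite mul1m.
Defined.

Lemma stabR (M : finMonoid) (a b u v y : M) :
  b = u ** a ** v -> a = b ** y -> exists w, b = a ** w.
Proof.
move=> hb ha.
have := @stabL (opM M) a b v u y.
apply.
- by rewrite hb /= mmulA.
- exact: ha.
Qed.

Lemma memJ (M : finMonoid) (a x : M) :
  reflect (exists u v, x = u ** a ** v) (x \in J a).
Proof.
apply: (iffP imset2P) => [[u v _ _ ->]|[u [v ->]]]; first by exists u, v.
by exists u v.
Qed.

Lemma memJ_self (M : finMonoid) (a : M) : a \in J a.
Proof. by apply/memJ; exists (mone M), (mone M); rewrite mul1m mulm1. Qed.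

Lemma subJ (M : finMonoid) (a b : M) : a \in J b -> J a \subset J b.
Proof.
move/memJ=> [u [v ->]]; apply/subsetP=> x /memJ [u' [v' ->]].
by apply/memJ; exists (u' ** u), (v ** v'); rewrite !mmulA.
Qed.

Lemma pick_minideal (M : finMonoid) (S : {set M}) :
  mone M \in S -> (forall a b, a \in S -> b \in S -> a ** b \in S) ->
  let e := odflt (mone M) [pick e in minideal S | idem e] in
  [/\ e \in S, idem e & forall I, is_ideal_of S I -> I != set0 -> e \in I].
Proof.
move=> S1 SM.
suff [e0 He0]: exists e, (e \in minideal S) && idem e.
  case: pickP => [e /andP [He ie]|H]; last by move: (H e0); rewrite He0.
  move: He; rewrite /minideal inE => /andP [eS /forallP Hall].
  split=> // I HI I0; exact: (implyP (Hall I) (introT andP (conj HI I0))).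
have exI : exists n, [exists I : {set M}, [&& is_ideal_of S I, I != set0 & #|I| == n]].
  exists #|S|; apply/existsP; exists S; rewrite eqxx andbT.
  apply/andP; split.
    apply/andP; split; first exact: subxx.
    by apply/forallP=> s; apply/implyP=> sS; apply/forallP=> i; apply/implyP=> iS;
       rewrite !SM.
  by apply/set0Pn; exists (mone M).
case: (ex_minnP exI) => n /existsP [K /and3P [KI K0 /eqP cK]] minK.
have sKI : forall I, is_ideal_of S I -> I != set0 -> K \subset I.
  move=> I II I0.
  move: KI II => /andP [KS /forallP KC] /andP [IS /forallP IC].
  have KIi : is_ideal_of S (K :&: I).
    apply/andP; split; first by apply: subset_trans KS; exact: subsetIl.
    apply/forallP=> s; apply/implyP=> sS; apply/forallP=> i; apply/implyP.
    rewrite inE => /andP [iK iI].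
    move: (implyP (KC s) sS) => /forallP /(_ i) /implyP /(_ iK) /andP [k1 k2].
    move: (implyP (IC s) sS) => /forallP /(_ i) /implyP /(_ iI) /andP [i1 i2].
    by rewrite !inE k1 k2 i1 i2.
  have KI0 : K :&: I != set0.
    move: K0 I0 => /set0Pn [k kK] /set0Pn [i iI].
    apply/set0Pn; exists (k ** i); rewrite inE.
    have iS : i \in S by apply: (subsetP IS).
    have kS : k \in S by apply: (subsetP KS).
    move: (implyP (KC i) iS) => /forallP /(_ k) /implyP /(_ kK) /andP [_ ->].
    by move: (implyP (IC k) kS) => /forallP /(_ i) /implyP /(_ iI) /andP [-> _].
  have := minK #|K :&: I|; rewrite -cK.
  have -> : [exists I0, [&& is_ideal_of S I0, I0 != set0 & #|I0| == #|K :&: I|]].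
    by apply/existsP; exists (K :&: I); rewrite KIi KI0 eqxx.
  move=> /(_ isT) le; apply/subsetP=> x xK.
  have : K :&: I = K by apply/eqP; rewrite eqEcard subsetIl le.
  by move=> eq; move: xK; rewrite -eq inE => /andP [].
move: (K0) => /set0Pn [k kK].
move: (KI) => /andP [KS /forallP KC].
have kS : k \in S by apply: (subsetP KS).
have powS : forall j, mpow k j \in S by elim=> [|j IH] //=; rewrite SM.
have [n' n0 idn] := idem_pow k.
case: n' n0 idn => // n' _ idn.
exists (mpow k n'.+1); apply/andP; split; last by apply/eqP.
rewrite /minideal inE.
have kK' : mpow k n'.+1 \in K.
  by move: (implyP (KC _) (powS n')) => /forallP /(_ k) /implyP /(_ kK) /andP [_ ->].
rewrite (subsetP KS) //=.
apply/forallP=> I; apply/implyP=> /andP [II I0].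
exact: (subsetP (sKI I II I0)).
Qed.

Lemma gen_ideal (M : finMonoid) (S : {set M}) (e : M) :
  (forall a b, a \in S -> b \in S -> a ** b \in S) -> mone M \in S -> e \in S ->
  is_ideal_of S [set a ** e ** b | a in S, b in S] /\
  [set a ** e ** b | a in S, b in S] != set0.
Proof.
move=> SM S1 eS; split; last first.
  by apply/set0Pn; exists e; apply/imset2P; exists (mone M) (mone M);
     rewrite ?mul1m ?mulm1.
apply/andP; split.
  by apply/subsetP=> x /imset2P [a b aS bS ->]; rewrite !SM.
apply/forallP=> s; apply/implyP=> sS; apply/forallP=> i; apply/implyP.
move=> /imset2P [a b aS bS ->]; apply/andP; split; apply/imset2P.
  by exists (s ** a) b; rewrite ?SM // !mmulA.
by exists a (b ** s); rewrite ?SM // !mmulA.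
Qed.

Lemma idemE (M : finMonoid) (e : M) : idem e -> e ** e = e.
Proof. by move/eqP. Qed.

Lemma homE (M : finMonoid) (e f m : M) : idem e -> idem f -> hom e f m ->
  f ** m = m /\ m ** e = m.
Proof.
move=> /idemE ie /idemE if_ [x ->]; split.
  by rewrite !mmulA if_.
by rewrite -mmulA ie.
Qed.

Lemma homI (M : finMonoid) (e f m : M) : f ** m = m -> m ** e = m -> hom e f m.
Proof. by move=> h1 h2; exists m; rewrite h1 h2. Qed.

Lemma StR_sub (M : finMonoid) (m : M) :
  mone M \in StR m /\ (forall a b, a \in StR m -> b \in StR m -> a ** b \in StR m).
Proof.
split; first by rewrite inE mulm1.
by move=> a b; rewrite !inE => /eqP ha /eqP hb; rewrite mmulA ha hb.
Qed.

Lemma StL_sub (M : finMonoid) (m : M) :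
  mone M \in StL m /\ (forall a b, a \in StL m -> b \in StL m -> a ** b \in StL m).
Proof.
split; first by rewrite inE mul1m.
by move=> a b; rewrite !inE => /eqP ha /eqP hb; rewrite -mmulA hb ha.
Qed.

Lemma eR_spec (M : finMonoid) (m : M) :
  [/\ m ** eR m = m, idem (eR m) &
   forall e, m ** e = m -> eR m \in J e].
Proof.
rewrite /eR; have [S1 SM] := StR_sub m.
have [H1 H2 H3] := pick_minideal S1 SM.
split; first by move: H1; rewrite inE => /eqP.
  exact: H2.
move=> e me.
have eS : e \in StR m by rewrite inE me.
have [HI HI0] := gen_ideal SM S1 eS.
move: (H3 _ HI HI0) => /imset2P [a b _ _ ->].
by apply/memJ; exists a, b.
Qed.

Lemma eL_spec (M : finMonoid) (m : M) :
  [/\ eL m ** m = m, idem (eL m) &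
   forall e, e ** m = m -> eL m \in J e].
Proof.
rewrite /eL; have [S1 SM] := StL_sub m.
have [H1 H2 H3] := pick_minideal S1 SM.
split; first by move: H1; rewrite inE => /eqP.
  exact: H2.
move=> e me.
have eS : e \in StL m by rewrite inE me.
have [HI HI0] := gen_ideal SM S1 eS.
move: (H3 _ HI HI0) => /imset2P [a b _ _ ->].
by apply/memJ; exists a, b.
Qed.

Lemma J_eq (M : finMonoid) (a b : M) : a \in J b -> b \in J a -> J a = J b.
Proof. by move=> h1 h2; apply/eqP; rewrite eqEsubset !subJ. Qed.

Theorem mainTheorem19 (M : finMonoid) (eX eY m : M) :
  inDG M -> idem eX -> idem eY ->
  irreducible eX eY m <->
  [/\ eX = eR m, eY = eL m, m \notin nablaprod (J eY) (J eX) & null m].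
Proof.
move=> [_ DG] iX iY.
have iX' := idemE iX; have iY' := idemE iY.
have [mR iR minR] := eR_spec m.
have [mL iL minL] := eL_spec m.
split.
- move=> [Hhom Nsm Nse Hfact].
  have [Ym mX] := homE iX iY Hhom.
  have Hnull : null m.
    move=> [x Hx].
    set y := eX ** x ** eY.
    have mym : m ** y ** m = m.
      by rewrite /y !mmulA mX -(mmulA _ eY) Ym -Hx.
    have yX : eX ** y = y by rewrite /y !mmulA iX'.
    have yY : y ** eY = y by rewrite /y -!mmulA iY'.
    clearbody y.
    have ig : idem (y ** m).
      by apply/eqP; rewrite -!mmulA (mmulA m y m) mym.
    have [] := Hfact (y ** m) (y ** m) m ig.
    + by apply: homI; [apply: idemE | rewrite -mmulA mX].
    + by apply: homI; [exact: Ym | rewrite mmulA mym].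
    + by rewrite mmulA mym.
    + move=> [r /(homE ig iX) [rX rg] ry]; apply: Nsm; exists (r ** y).
        by apply: homI; rewrite ?mmulA ?rX // -mmulA yY.
      by rewrite -mmulA.
    + move=> [s /(homE iY ig) [gs sY] ms]; apply: Nse; exists s => //.
      by apply: homI; rewrite // -gs !mmulA yX.
  have HX : eX = eR m.
    set f := eR m.
    have [] := Hfact f (f ** eX) m iR.
    + by apply: homI; [rewrite mmulA (idemE iR) | rewrite -mmulA iX'].
    + by apply: homI.
    + by rewrite mmulA mR mX.
    + move=> [r /(homE iR iX) [rX rf] rfX].
      apply: DG => //; apply: J_eq; last exact (minR eX mX).
      by apply/memJ; exists r, eX; rewrite -{1}rfX mmulA.
    + move=> [s /(homE iY iR) [fs sY] ms]; exfalso; apply: Hnull; exists s.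
      by rewrite ms Ym.
  have HY : eY = eL m.
    set f := eL m.
    have [] := Hfact f m (eY ** f) iL.
    + by apply: homI.
    + by apply: homI; [rewrite mmulA iY' | rewrite -mmulA (idemE iL)].
    + by rewrite -mmulA mL Ym.
    + move=> [r /(homE iL iX) [rX rf] rm]; exfalso; apply: Hnull; exists r.
      by rewrite -mmulA rm mX.
    + move=> [s /(homE iY iL) [fs sY] ms].
      apply: DG => //; apply: J_eq; last exact (minL eY Ym).
      by apply/memJ; exists eY, s; rewrite ms.
  split=> //.
  apply/imset2P=> [[a b Ha Hb Hm]].
  move: Ha Hb; rewrite !inE => /negP Ha /negP Hb.
  have [] := Hfact (mone M) (b ** eX) (eY ** a).
  + by apply/eqP; rewrite mul1m.
  + by apply: homI; rewrite ?mul1m // -mmulA iX'.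
  + by apply: homI; rewrite ?mulm1 // mmulA iY'.
  + by rewrite -mmulA (mmulA a) -Hm mX Ym.
  + move=> [r _ rb]; apply: Hb; apply: subJ.
    by apply/memJ; exists r, eX; rewrite -mmulA rb.
  + move=> [s _ as_]; apply: Ha; apply: subJ.
    apply/memJ; exists eY, s.
    by rewrite as_.
- move=> [HX HY Hn Hnull].
  have mX : m ** eX = m by rewrite HX.
  have Ym : eY ** m = m by rewrite HY.
  split.
  + exact: homI.
  + move=> [r _ rm]; apply: Hnull; exists r.
    by rewrite -mmulA rm mX.
  + move=> [s _ ms]; apply: Hnull; exists s.
    by rewrite ms Ym.
  + move=> g h k ig hh hk Hm.
    have [gh hX] := homE iX ig hh.
    have [Yk kg] := homE ig iY hk.
    have [kn|kn] := boolP (k \in nabla (J eY)); last first.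
      right.
      move: kn; rewrite inE negbK => /subsetP /(_ _ (memJ_self eY)) /memJ [u [v uv]].
      have [w Hw] := stabR uv (esym Yk).
      exists (g ** w ** eY).
        by apply: homI; [rewrite !mmulA (idemE ig) | rewrite -mmulA iY'].
      by rewrite !mmulA kg -Hw iY'.
    have [hn|hn] := boolP (h \in nabla (J eX)); last first.
      left.
      move: hn; rewrite inE negbK => /subsetP /(_ _ (memJ_self eX)) /memJ [u [v uv]].
      have [w Hw] := stabL uv (esym hX).
      exists (eX ** w ** g).
        by apply: homI; [rewrite !mmulA iX' | rewrite -mmulA (idemE ig)].
      by rewrite -mmulA gh -mmulA -Hw iX'.
    exfalso; move/negP: Hn; apply.
    by apply/imset2P; exists k h.
Qed.
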